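(* Let $n,m\in\mathbb{N}$ and let $f:\mathbb{F}_2^n\to\mathbb{F}_2$ be $m$-bent. Run algorithm $\mathbb{A}^{(m)}(\mathrm{H}^{\otimes n})$ with $g=f$ and measure all $2n$ qubits. Then the probability of observing $\ket{0^n}\ket{0^n}$ is $2^{-n}$, and for every $\mathbf{x}\neq 0^n$ the probability of observing $\ket{\mathbf{x}}\ket{0^n}$ is $0$.
   Context: $\zeta_m=e^{2\pi i/m}$, $\overline{\zeta_m}$ its conjugate; $wt$ is Hamming weight; $\mathbf{x}\cdot\mathbf{y}=\bigoplus_i x_iy_i$. $f$ is $m$-bent if $|\mathcal{H}^{(m)}_f(\boldsymbol{\omega})|=1$ for all $\boldsymbol{\omega}$, where $\mathcal{H}^{(m)}_f(\boldsymbol{\omega})=2^{-n/2}\sum_{\mathbf{x}}(-1)^{f(\mathbf{x})\oplus\mathbf{x}\cdot\boldsymbol{\omega}}\zeta_m^{wt(\mathbf{x})}$. Gates: $\mathrm{H}$ Hadamard; $\Omega_m=\frac{1}{\sqrt2}\begin{pmatrix}1&\zeta_m\\1&-\zeta_m\end{pmatrix}$; $\overline{\Omega}_m=\frac{1}{\sqrt2}\begin{pmatrix}1&\overline{\zeta_m}\\1&-\overline{\zeta_m}\end{pmatrix}$; $U_f$ is the phase oracle $\ket{\mathbf{x}}\mapsto(-1)^{f(\mathbf{x})}\ket{\mathbf{x}}$. Algorithm $\mathbb{A}^{(m)}(\mathrm{C}_n)$ (with functions $f,g$): two $n$-qubit registers start in $\ket{0^n}\ket{0^n}$; apply $\mathrm{C}_n$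 to the first register; then apply to the second register in order $\mathrm{H}^{\otimes n}$, $U_f$, $\Omega_m^{\otimes n}$, then the two-register gate $\ket{\mathbf{y}}\ket{\mathbf{x}}\mapsto(-1)^{\mathbf{x}\cdot\mathbf{y}}\ket{\mathbf{y}}\ket{\mathbf{x}}$, then $\mathrm{H}^{\otimes n}$, $U_g$, $\overline{\Omega}_m^{\otimes n}$ on the second register; finally measure both registers. *)

(* Defs.v *)
From HB Require Import structures.
From mathcomp Require Import all_boot all_order all_algebra.
From mathcomp Require Import all_classical all_reals all_analysis.
From mathcomp Require Import complex.
Set Implicit Arguments. Unset Strict Implicit. Unset Printing Implicit Defensive.
Import Order.TTheory GRing.Theory Num.Theory.
Local Open Scope ring_scope.

Section Quantum.
Variable R : realType.
Local Notation C := R[i].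

Definition bv (n : nat) := {ffun 'I_n -> bool}.
Definition zero_bv (n : nat) : bv n := [ffun => false].

Definition wt n (x : bv n) : nat := \sum_(i < n) (x i : nat).
Definition dotb n (x y : bv n) : bool := \big[addb/false]_(i < n) (x i && y i).

Definition sgn (b : bool) : C := if b then -1 else 1.

Definition zeta (m : nat) : C :=
  (cos (2 * pi / m%:R) +i* sin (2 * pi / m%:R))%C.
Definition zetabar (m : nat) : C :=
  (cos (2 * pi / m%:R) -i* sin (2 * pi / m%:R))%C.

Definition isq2 : C := ((Num.sqrt (2 : R))^-1)%:C%C.

Definition Hm (m n : nat) (f : bv n -> bool) (w : bv n) : C :=
  isq2 ^+ n * \sum_(x : bv n) sgn (f x (+) dotb x w) * zeta m ^+ wt x.
Definition mbent (m n : nat) (f : bv n -> bool) : Prop :=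
  forall w : bv n, ComplexField.Normc.normc (Hm m f w) = 1.

(* single-qubit gates as matrices U out in *)
Definition Hgate (r c : bool) : C := isq2 * sgn (r && c).
Definition Omega (z : C) (r c : bool) : C :=
  isq2 * (if c then (if r then - z else z) else 1).
(* Omega_m = Omega (zeta m), Omegabar_m = Omega (zetabar m) *)

Definition tens n (U : bool -> bool -> C) (y x : bv n) : C :=
  \prod_(i < n) U (y i) (x i).

(* two-register states: psi y x = amplitude of |y>|x> *)
Definition state n := bv n -> bv n -> C.

Definition init (n : nat) : state n :=
  fun y x => if (y == zero_bv n) && (x == zero_bv n) then 1 else 0.
Definition app1 n (M : bv n -> bv n -> C) (psi : state n) : state n :=
  fun y x => \sum_(y' : bv n) M y y' * psi y' x.
Definition app2 n (M : bv n -> bv n -> C) (psi : state n) : state n :=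
  fun y x => \sum_(x' : bv n) M x x' * psi y x'.
Definition oracle2 n (f : bv n -> bool) (psi : state n) : state n :=
  fun y x => sgn (f x) * psi y x.
Definition cphase n (psi : state n) : state n :=
  fun y x => sgn (dotb x y) * psi y x.

Definition algA (m n : nat) (Cn : bv n -> bv n -> C) (f g : bv n -> bool)
  : state n :=
  let s1 := app1 Cn (@init n) in
  let s2 := app2 (tens Hgate) s1 in
  let s3 := oracle2 f s2 in
  let s4 := app2 (tens (Omega (zeta m))) s3 in
  let s5 := cphase s4 in
  let s6 := app2 (tens Hgate) s5 in
  let s7 := oracle2 g s6 in
  app2 (tens (Omega (zetabar m))) s7.

Definition prob n (psi : state n) (y x : bv n) : R :=
  ComplexField.Normc.normc (psi y x) ^+ 2.

End Quantum.

(* Main.v *)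
Require Import Defs.
From HB Require Import structures.
From mathcomp Require Import all_boot all_order all_algebra.
From mathcomp Require Import all_classical all_reals all_analysis.
From mathcomp Require Import complex.
From mathcomp Require Import ring.
Import Order.TTheory GRing.Theory Num.Theory.
Local Open Scope ring_scope.

Section Pf.
Variable R : realType.
Local Notation C := R[i].
Local Notation sgn := (@sgn R).
Local Notation s := (@isq2 R).
Variable n : nat.
Local Notation z0 := (zero_bv n).

Lemma sgnD a b : sgn (a (+) b) = sgn a * sgn b.
Proof. by case: a; case: b; rewrite /sgn /= ?mulN1r ?mul1r ?opprK ?mulr1. Qed.

Lemma sgn0 : sgn false = 1. Proof. by []. Qed.

Lemma sgn_big (F : 'I_n -> bool) :
  \prod_(i < n) sgn (F i) = sgn (\big[addb/false]_(i < n) F i).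
Proof. by rewrite (big_morph sgn sgnD sgn0). Qed.

Lemma dotbC (x y : bv n) : dotb x y = dotb y x.
Proof. by apply: eq_bigr => i _; rewrite andbC. Qed.

Lemma dotb0 (x : bv n) : dotb x z0 = false.
Proof. by rewrite /dotb big1 // => i _; rewrite ffunE andbF. Qed.

Lemma dotb0l (x : bv n) : dotb z0 x = false.
Proof. by rewrite dotbC dotb0. Qed.

Lemma tensH (y x : bv n) : tens (Hgate R) y x = s ^+ n * sgn (dotb y x).
Proof.
by rewrite /tens /Hgate big_split /= prodr_const card_ord sgn_big.
Qed.

Lemma tensO (z : C) (y x : bv n) :
  tens (Omega z) y x = s ^+ n * (z ^+ wt x * sgn (dotb y x)).
Proof.
rewrite /tens /Omega.
rewrite (eq_bigr (fun i => s * (z ^+ (x i : nat) * sgn (y i && x i)))); last first.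
  by move=> i _; case: (x i); case: (y i); rewrite /sgn /= ?expr1 ?expr0 ?mulr1 ?mulrN1.
by rewrite big_split /= prodr_const card_ord big_split /= prodrXr sgn_big.
Qed.

Lemma sum_if (F : bv n -> C) (a : bv n) :
  \sum_(x : bv n) (if x == a then F x else 0) = F a.
Proof.
rewrite (bigD1 a) //= eqxx big1 ?addr0 // => x /negbTE -> //.
Qed.


Lemma conj_sgn b : conjc (sgn b) = sgn b.
Proof. by case: b; rewrite /sgn /=; apply/eqP; rewrite eq_complex /= ?oppr0 ?opprK ?eqxx. Qed.

Lemma normc1_conj (w : C) : ComplexField.Normc.normc w = 1 -> w * conjc w = 1.
Proof.
case: w => a b /= H.
have H2 : a ^+ 2 + b ^+ 2 = 1.
  by rewrite -(sqr_sqrtr (a:=a ^+ 2 + b ^+ 2)) ?H ?expr1n // addr_ge0 ?sqr_ge0.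
apply/eqP; rewrite eq_complex /=; apply/andP; split; apply/eqP.
  by rewrite -H2; ring.
by ring.
Qed.

Definition flip (i : 'I_n) (x : bv n) : bv n :=
  [ffun j => if j == i then ~~ x j else x j].

Lemma flipK i : involutive (flip i).
Proof.
move=> x; apply/ffunP => j; rewrite !ffunE; case: (j == i) => //; exact: negbK.
Qed.

Lemma dotb_flip i (x y : bv n) : y i -> dotb (flip i x) y = ~~ dotb x y.
Proof.
move=> yi; rewrite /dotb (bigD1 i) //= [in RHS](bigD1 i) //= !ffunE eqxx yi.
rewrite !andbT (eq_bigr (fun j => x j && y j)); last first.
  by move=> j /negbTE nji; rewrite ffunE nji.
by case: (x i); rewrite /= ?negbK.
Qed.

Lemma char_sum (y : bv n) :
  \sum_(x : bv n) sgn (dotb x y) = if y == z0 then (2 ^ n)%:R else 0.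
Proof.
case: eqP => [->|/eqP ny].
  rewrite (eq_bigr (fun _ => 1)); last by move=> x _; rewrite dotb0.
  by rewrite sumr_const card_ffun card_bool card_ord.
have [i yi] : exists i, y i.
  apply/existsP; move: ny; apply: contraR; rewrite negb_exists => /forallP H.
  by apply/eqP/ffunP => j; rewrite ffunE; apply/negbTE/H.
set S := \sum_x _.
have HS : S = - S.
  rewrite {1}/S (reindex_inj (inv_inj (flipK i))) /= /S -sumrN.
  by apply: eq_bigr => x _; rewrite dotb_flip //; case: (dotb x y); rewrite /sgn ?opprK.
have : S *+ 2 = 0 by rewrite mulr2n {1}HS addNr.
by move/eqP; rewrite mulrn_eq0 /= => /eqP.
Qed.


Variables (m : nat) (f : bv n -> bool).
Local Notation W := (Hm R m f).

Lemma W_conj w : conjc (W w) =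
  s ^+ n * \sum_(x : bv n) sgn (f x (+) dotb x w) * zetabar R m ^+ wt x.
Proof.
rewrite /Hm rmorphM rmorphXn rmorph_sum; congr (_ * _); first by rewrite /isq2 /=; apply/eqP; rewrite eq_complex /= oppr0 !eqxx.
apply: eq_bigr => x _; rewrite rmorphM rmorphXn; congr (_ * _ ^+ _); exact: conj_sgn.
Qed.

Lemma algA_y0 (y : bv n) : algA m (tens (Hgate R)) f f y z0 =
  s ^+ n * s ^+ n * s ^+ n * \sum_(x : bv n) sgn (dotb x y) * (W x * conjc (W x)).
Proof.
rewrite /algA /=.
have e1 : app1 (tens (Hgate R)) (@init R n) = fun y x => if x == z0 then s ^+ n else 0.
  apply: boolp.funext => y'; apply: boolp.funext => x; rewrite /app1 /init.
  case: (eqVneq x z0) => [ex|nx]; first subst x.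
    rewrite (bigD1 z0) //= big1 ?addr0.
      rewrite ifT; last by apply/andP; split; apply/eqP.
      by rewrite tensH dotb0 sgn0 !mulr1.
    move=> y'' ny; rewrite ifF ?mulr0 //; apply/negbTE/negP => /andP [/eqP h _].
    by rewrite h eqxx in ny.
  by rewrite big1 // => y'' _; rewrite andbF mulr0.
rewrite e1.
have e2 : app2 (tens (Hgate R)) (fun (_ x : bv n) => if x == z0 then s ^+ n else 0)
   = fun _ _ => s ^+ n * s ^+ n.
  apply: boolp.funext => y'; apply: boolp.funext => x; rewrite /app2.
  rewrite (eq_bigr (fun x' => if x' == z0 then tens (Hgate R) x x' * s ^+ n else 0)).
    by rewrite sum_if tensH dotb0 sgn0 !mulr1.
  by move=> x' _; case: eqP; rewrite ?mulr0.
rewrite e2.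
have e4 : app2 (tens (Omega (zeta R m))) (oracle2 f (fun (_ _ : bv n) => s ^+ n * s ^+ n))
   = fun _ x => s ^+ n * s ^+ n * W x.
  apply: boolp.funext => y'; apply: boolp.funext => x; rewrite /app2 /oracle2 /Hm.
  rewrite !mulr_sumr; apply: eq_bigr => x' _.
  rewrite tensO sgnD (dotbC x' x); ring.
rewrite e4 /app2 /oracle2 /cphase.
under eq_bigr => x'' _ do rewrite !mulr_sumr.
rewrite exchange_big /= mulr_sumr; apply: eq_bigr => x' _.
rewrite W_conj !mulr_sumr; apply: eq_bigr => x'' _.
rewrite tensO tensH dotb0l sgn0 sgnD mulr1; ring.
Qed.

End Pf.

Theorem corollary4 (R : realType) (n m : nat) (f : bv n -> bool) :
  mbent R m f ->
  prob (algA m (tens (Hgate R)) f f) (zero_bv n) (zero_bv n)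
    = (2%:R ^- n : R) /\
  (forall x : bv n, x != zero_bv n ->
     prob (algA m (tens (Hgate R)) f f) x (zero_bv n) = 0).
Proof.
move=> hb.
have key : forall y, algA m (tens (Hgate R)) f f y (zero_bv n) =
   isq2 R ^+ n * isq2 R ^+ n * isq2 R ^+ n * (if y == zero_bv n then (2 ^ n)%:R else 0).
  move=> y; rewrite algA_y0 -char_sum; congr (_ * _).
  by apply: eq_bigr => x _; rewrite normc1_conj ?mulr1 // hb.
split; last first.
  move=> x nx; rewrite /prob key (negbTE nx) mulr0.
  by rewrite ComplexField.Normc.normc0 expr0n.
rewrite /prob key eqxx.
set q := (Num.sqrt (2 : R))^-1.
have -> : isq2 R ^+ n * isq2 R ^+ n * isq2 R ^+ n * (2 ^ n)%:R
    = ((q ^+ n * q ^+ n * q ^+ n * (2 ^ n)%:R)%:C)%C.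
  by rewrite !rmorphM !rmorphXn rmorph_nat.
rewrite /= expr0n /= addr0 sqr_sqrtr ?sqr_ge0 //.
have hq : forall k, (q ^+ k) ^+ 2 = (2%:R ^+ k)^-1.
  move=> k; rewrite -exprM mulnC exprM /q exprVn sqr_sqrtr ?ler0n //.
  by rewrite exprVn.
rewrite !exprMn !hq natrX.
have h2 : (2%:R ^+ n : R) != 0 by rewrite expf_neq0 // pnatr_eq0.
rewrite -exprM mulnC exprM.
rewrite exprAC; move: h2; set a := (2%:R ^+ n : R) => h2; by field.
Qed.
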